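(* Let $G=(V,E,p,(V_{E},V_{O}))$ be a parity game, let $D$ be an Odd-dominion of $G$, and let $D'\subseteq D$ be nonempty such that for every edge $(u,w)\in E$ with $u\in D'$ and $w\in D\setminus D'$ we have $u\in V_{E}$. Let $U\subseteq V$ be such that $G\cap U$ is a parity game (every vertex of $U$ has a successor in $U$), $D'\subseteq U$ and $U\cap(D\setminus D')=\emptyset$. Then $D'$ is an Odd-dominion of $G\cap U$.
   Context: A parity game $G=(V,E,p,(V_{E},V_{O}))$: finite $V$ partitioned into $V_{E}$ (Even) and $V_{O}$ (Odd), total edge relation $E$, priorities $p:V\to\mathbb{N}$. Plays are infinite paths; Even wins iff the least priority occurring infinitely often is even. $G\cap U$ denotes the game restricted to vertex set $U$ with edges $E\cap(U\times U)$. A set $D$ is an Odd-dominion of a game if Odd has a strategy in that game such that every play starting in $D$ consistent with it is won by Odd and stays in $D$. *)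

(* Defs.v *)
From mathcomp Require Import all_boot.
Set Implicit Arguments. Unset Strict Implicit. Unset Printing Implicit Defensive.

(* A parity game on a vertex set U (a subset of a finite type V), with edge
   relation E restricted to U x U, priorities p, and owner predicate
   [even] : a vertex v belongs to V_E iff [even v], to V_O otherwise. *)

Definition play (V : finType) (U : {set V}) (E : rel V) (pi : nat -> V) : Prop :=
  forall i, pi i \in U /\ E (pi i) (pi i.+1).

(* history-dependent strategies: sigma h v = successor chosen at current
   vertex v after the history h (the vertices visited before v) *)
Definition strategy (V : finType) := seq V -> V -> V.

Definition odd_strategy (V : finType) (U : {set V}) (E : rel V) (even : pred V)
  (sigma : strategy V) : Prop :=
  forall h v, all (fun x => x \in U) h -> v \in U -> ~~ even v ->
    sigma h v \in U /\ E v (sigma h v).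

Definition consistent_odd (V : finType) (even : pred V) (sigma : strategy V)
  (pi : nat -> V) : Prop :=
  forall i, ~~ even (pi i) -> pi i.+1 = sigma (mkseq pi i) (pi i).

Definition inf_often (V : finType) (p : V -> nat) (pi : nat -> V) (k : nat) : Prop :=
  forall n, exists m, n <= m /\ p (pi m) = k.

Definition odd_wins (V : finType) (p : V -> nat) (pi : nat -> V) : Prop :=
  exists k, [/\ inf_often p pi k, odd k & forall k', inf_often p pi k' -> k <= k'].

Definition odd_dominion (V : finType) (U : {set V}) (E : rel V) (p : V -> nat)
  (even : pred V) (D : {set V}) : Prop :=
  D \subset U /\
  exists sigma : strategy V, odd_strategy U E even sigma /\
    forall pi, play U E pi -> pi 0 \in D -> consistent_odd even sigma pi ->
      odd_wins p pi /\ (forall i, pi i \in D).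

(* Main.v *)
Require Import Defs.
From mathcomp Require Import all_boot.
Set Implicit Arguments. Unset Strict Implicit. Unset Printing Implicit Defensive.

Section Ext.
Variables (V : finType) (E : rel V) (even : pred V) (sigma : strategy V).
Hypothesis succ : forall v : V, exists w, E v w.
Hypothesis legal : forall h v, ~~ even v -> E v (sigma h v).
Variables (f : nat -> V) (m : nat).

Definition nxt (s : seq V) : V :=
  let v := last (f 0) s in
  if even v then odflt v [pick w | E v w] else sigma (take (size s).-1 s) v.

Fixpoint pre (k : nat) : seq V :=
  match k with
  | 0 => [:: f 0]
  | k'.+1 => if k'.+1 <= m then mkseq f k'.+2 else rcons (pre k') (nxt (pre k'))
  end.

Definition qq k := last (f 0) (pre k).

Lemma last_mkseq (g : nat -> V) x0 n : last x0 (mkseq g n.+1) = g n.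
Proof. by rewrite (last_nth x0) size_mkseq /= nth_mkseq. Qed.

Lemma qq_f i : i <= m -> qq i = f i.
Proof.
case: i => [|i] //= Hi; rewrite /qq /= Hi; exact: last_mkseq.
Qed.

Lemma mkseq_in (g h : nat -> V) n : (forall i, i < n -> g i = h i) -> mkseq g n = mkseq h n.
Proof.
move=> H; apply/eq_in_map => i; rewrite mem_iota add0n => /andP[_]; exact: H.
Qed.

Lemma pre_eq k : pre k = mkseq qq k.+1.
Proof.
elim: k => [|k IH]; first by rewrite /mkseq /= /qq.
rewrite [pre _.+1]/=.
case: ifP => Hk.
  apply: mkseq_in => i Hi; rewrite qq_f //; exact: leq_trans Hk.
rewrite (mkseqS qq k.+1) -IH; f_equal.
by rewrite /qq /= Hk last_rcons.
Qed.

Lemma qq_next i : m <= i -> qq i.+1 = nxt (mkseq qq i.+1).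
Proof.
move=> Hi; rewrite {1}/qq /=; have -> : (i < m) = false by apply/negbTE; rewrite -leqNgt.
by rewrite last_rcons pre_eq.
Qed.

Hypothesis Hf : forall i, i < m -> E (f i) (f i.+1).
Hypothesis Hc : forall i, i < m -> ~~ even (f i) -> f i.+1 = sigma (mkseq f i) (f i).

Lemma ext_play : play [set: V] E qq /\ consistent_odd even sigma qq.
Proof.
split.
  move=> i; split; first by rewrite inE.
  case: (ltnP i m) => Hi.
    rewrite !qq_f //; [exact: Hf | exact: ltnW].
  rewrite qq_next // /nxt last_mkseq.
  case: ifP => He; last by apply: legal; rewrite He.
  case: pickP => [w //|H0]; case: (succ (qq i)) => w Hw; by rewrite H0 in Hw.
move=> i Ho; case: (ltnP i m) => Hi.
  have Hi' : i <= m by exact: ltnW.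
  rewrite (qq_f Hi) (qq_f Hi') in Ho *; rewrite Hc //.
  have -> : mkseq qq i = mkseq f i; last by [].
  apply: mkseq_in => j Hj.
  rewrite qq_f //; apply: ltnW; exact: ltn_trans Hj Hi.
rewrite qq_next // /nxt last_mkseq (negbTE Ho) size_mkseq /=.
by rewrite mkseqS -cats1 take_size_cat // size_mkseq.
Qed.
End Ext.

Theorem lemma7 (V : finType) (E : rel V) (p : V -> nat) (even : pred V)
  (D D' U : {set V}) :
  (forall v : V, exists w, E v w) ->
  odd_dominion [set: V] E p even D ->
  D' \subset D -> D' != set0 ->
  (forall u w, E u w -> u \in D' -> w \in D :\: D' -> even u) ->
  (forall u, u \in U -> exists2 w, w \in U & E u w) ->
  D' \subset U -> [disjoint U & D :\: D'] ->
  odd_dominion U E p even D'.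
Proof.
move=> hsucc [_ [sigma [Hleg Hdom]]] HD'D _ Hedge HU HD'U Hdisj.
have legal : forall h v, ~~ even v -> E v (sigma h v).
  move=> h v Hv; have [_ //] := Hleg h v (introT allP (fun x _ => in_setT x)) (in_setT v) Hv.
split=> //.
exists (fun h v => if (v \in D') && (sigma h v \in D') then sigma h v
                   else odflt v [pick w in U | E v w]).
split.
  move=> h v _ Hv Ho; case: ifP => [/andP[_ Hs]|_].
    by split; [exact: (subsetP HD'U) | exact: legal].
  case: pickP => [w /andP[] //|H0].
  by case: (HU v Hv) => w Hw1 Hw2; move: (H0 w); rewrite Hw1 Hw2.
move=> pi Hpi H0 Hcons.
have Hf : forall m i, i < m -> E (pi i) (pi i.+1) by move=> m i _; case: (Hpi i).
have claim : forall n, (forall i, i <= n -> pi i \in D') /\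
    (forall i, i < n -> ~~ even (pi i) -> pi i.+1 = sigma (mkseq pi i) (pi i)).
  elim=> [|n [IH1 IH2]].
    by split=> // i; rewrite leqn0 => /eqP ->.
  have Hn : pi n \in D' by exact: IH1.
  have HqD : forall m, (forall i, i < m -> ~~ even (pi i) -> pi i.+1 = sigma (mkseq pi i) (pi i)) ->
      forall i, qq E even sigma pi m i \in D.
    move=> m Hc; have [Hq1 Hq2] := ext_play hsucc legal (Hf m) Hc.
    have [_ Hin] := Hdom _ Hq1 (ltac:(rewrite qq_f //; exact: (subsetP HD'D))) Hq2.
    exact: Hin.
  suff [HnD Hcn] : pi n.+1 \in D' /\ (~~ even (pi n) -> pi n.+1 = sigma (mkseq pi n) (pi n)).
    split; first by move=> i; rewrite leq_eqVlt => /orP[/eqP -> //|]; exact: IH1.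
    move=> i; rewrite ltnS leq_eqVlt => /orP[/eqP -> //|]; exact: IH2.
  case He: (even (pi n)).
    split=> //.
    have Hc : forall i, i < n.+1 -> ~~ even (pi i) -> pi i.+1 = sigma (mkseq pi i) (pi i).
      move=> i; rewrite ltnS leq_eqVlt => /orP[/eqP ->|]; [by rewrite He | exact: IH2].
    have := HqD _ Hc n.+1; rewrite qq_f // => HD.
    have HUn : pi n.+1 \in U by case: (Hpi n.+1).
    move: (disjointFr Hdisj HUn); rewrite inE HD andbT => /negbFE //.
  have Hc := IH2.
  have [Hq1 Hq2] := ext_play hsucc legal (Hf n) Hc.
  have := HqD _ Hc n.+1.
  rewrite (Hq2 n) ?qq_f // ?He //.
  have -> : mkseq (qq E even sigma pi n) n = mkseq pi n.
    apply: mkseq_in => j Hj; apply: qq_f; exact: ltnW.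
  move=> HsD.
  have Hs : sigma (mkseq pi n) (pi n) \in D'.
    apply/negPn/negP => Hs; move: (Hedge _ _ (legal (mkseq pi n) (pi n) (negbT He)) Hn).
    by rewrite inE Hs HsD He => /(_ isT).
  have Hp := Hcons n (negbT He); rewrite Hn Hs /= in Hp.
  by rewrite Hp.
have Hall : forall i, pi i \in D' by move=> i; case: (claim i) => H _; exact: H.
have Hcs : consistent_odd even sigma pi.
  by move=> i; case: (claim i.+1) => _ H; exact: H.
have Hpl : play [set: V] E pi by move=> i; split; [exact: in_setT | case: (Hpi i)].
have [Hw _] := Hdom _ Hpl (subsetP HD'D _ H0) Hcs.
by split.
Qed.
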